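(* Let $\mathcal{M}$ be any submonoid of $\mathcal{R}$ that contains $f_p$ for infinitely many primes $p$. Then $\mathcal{M}$ is not finitely generated.
   Context: $\mathcal{R}$ is the group of rational homeomorphisms of $\{0,1\}^\omega$: those $f$ for which there is a finite asynchronous binary transducer $(S,s_0,t,o)$ ($S$ finite, $t\colon S\times\{0,1\}\to S$, $o\colon S\times\{0,1\}\to\{0,1\}^*$) with $f(\psi)=o(s_0,\psi)$, where for $\sigma_1\sigma_2\cdots$ one sets $s_1=s_0$, $s_{n+1}=t(s_n,\sigma_n)$ and $o(s_0,\sigma_1\sigma_2\cdots)=o(s_1,\sigma_1)o(s_2,\sigma_2)\cdots$. For a prime $p$, $f_p\in\mathcal{R}$ is the homeomorphism that switches every $p$-th digit of a binary sequence (the digits in positions $p,2p,3p,\ldots$) and leaves the remaining digits unchanged. *)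

(* Defs.v *)
From Stdlib Require Import List.
From mathcomp Require Import all_boot.
Set Implicit Arguments. Unset Strict Implicit. Unset Printing Implicit Defensive.

(* Binary sequences {0,1}^omega, indexed from 0: position k+1 of the paper
   is index k here. *)
Definition cantor_pt := nat -> bool.

Record transducer := Transducer {
  tr_state : finType;
  tr_init : tr_state;
  tr_trans : tr_state -> bool -> tr_state;
  tr_out : tr_state -> bool -> seq bool }.

(* s_{n+1} = t(s_n, sigma_n), with s_1 = s_0 (here index 0). *)
Fixpoint tr_state_at (T : transducer) (psi : cantor_pt) (n : nat) : tr_state T :=
  match n with
  | 0 => tr_init T
  | n'.+1 => tr_trans (tr_state_at T psi n') (psi n')
  end.

Definition tr_prefix (T : transducer) (psi : cantor_pt) (n : nat) : seq bool :=
  flatten [seq tr_out (tr_state_at T psi k) (psi k) | k <- iota 0 n].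

(* f(psi) = o(s0, psi): the infinite concatenation of outputs is an infinite
   sequence and equals f psi. *)
Definition computes (T : transducer) (f : cantor_pt -> cantor_pt) : Prop :=
  forall psi : cantor_pt,
    (forall i, exists n, i < size (tr_prefix T psi n)) /\
    (forall n i, i < size (tr_prefix T psi n) ->
                 f psi i = nth false (tr_prefix T psi n) i).

Definition cantor_continuous (f : cantor_pt -> cantor_pt) : Prop :=
  forall (psi : cantor_pt) (n : nat), exists m : nat, forall phi : cantor_pt,
    (forall i, i < m -> phi i = psi i) -> forall i, i < n -> f phi i = f psi i.

Definition cantor_homeo (f : cantor_pt -> cantor_pt) : Prop :=
  exists g : cantor_pt -> cantor_pt,
    [/\ cancel f g, cancel g f, cantor_continuous f & cantor_continuous g].

Definition rational_homeo (f : cantor_pt -> cantor_pt) : Prop :=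
  cantor_homeo f /\ exists T : transducer, computes T f.

(* f_p: switch the digits in positions p, 2p, 3p, ... (1-indexed). *)
Definition f_switch (p : nat) (psi : cantor_pt) : cantor_pt :=
  fun k => if p %| k.+1 then ~~ psi k else psi k.

Definition submonoid_R (M : (cantor_pt -> cantor_pt) -> Prop) : Prop :=
  [/\ forall f, M f -> rational_homeo f,
      M id &
      forall f g, M f -> M g -> M (f \o g)].

Definition word_prod (w : seq (cantor_pt -> cantor_pt)) : cantor_pt -> cantor_pt :=
  foldr (fun f g => f \o g) id w.

Definition fin_gen_monoid (M : (cantor_pt -> cantor_pt) -> Prop) : Prop :=
  exists gens : seq (cantor_pt -> cantor_pt),
    (forall g, List.In g gens -> M g) /\
    (forall f, M f -> exists w : seq (cantor_pt -> cantor_pt),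
        (forall g, List.In g w -> List.In g gens) /\ f = word_prod w).

(* Main.v *)
Require Import Defs.
From mathcomp Require Import all_boot.
From mathcomp Require Import zify.
From Stdlib Require Import FunctionalExtensionality Classical.

Set Implicit Arguments. Unset Strict Implicit. Unset Printing Implicit Defensive.

Definition cat_pt (x : seq bool) (z : cantor_pt) : cantor_pt :=
  fun i => if i < size x then nth false x i else z (i - size x).

Definition shift (psi : cantor_pt) : cantor_pt := fun i => psi i.+1.

Definition rep (w : seq bool) k := flatten (nseq k w).

Lemma repD w a b : rep w (a + b) = rep w a ++ rep w b.
Proof. by elim: a => //= a IH; rewrite /rep /= -catA -IH. Qed.

Lemma shift_cat b x z : shift (cat_pt (b :: x) z) = cat_pt x z.
Proof.
apply: functional_extensionality => i.
by rewrite /shift /cat_pt /= ltnS subSS.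
Qed.

Lemma cat_pt0 z : cat_pt [::] z = z.
Proof. apply: functional_extensionality => i; by rewrite /cat_pt /= subn0. Qed.

Lemma cat_pt_size x z i : cat_pt x z (size x + i) = z i.
Proof. by rewrite /cat_pt ltnNge leq_addr /= addKn. Qed.

Section Aux.
Variable T : transducer.

Fixpoint st (s : tr_state T) (psi : cantor_pt) (n : nat) : tr_state T :=
  match n with 0 => s | n'.+1 => tr_trans (st s psi n') (psi n') end.

Definition pre (s : tr_state T) (psi : cantor_pt) n := flatten [seq tr_out (st s psi k) (psi k) | k <- iota 0 n].

Definition runw (s : tr_state T) (x : seq bool) := foldl (@tr_trans T) s x.

Fixpoint outw (s : tr_state T) (x : seq bool) : seq bool :=
  match x with [::] => [::] | b :: x' => tr_out s b ++ outw (tr_trans s b) x' end.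

Lemma st_init psi n : tr_state_at T psi n = st (tr_init T) psi n.
Proof. by elim: n => //= n ->. Qed.

Lemma pre_init psi n : tr_prefix T psi n = pre (tr_init T) psi n.
Proof. rewrite /tr_prefix /pre; congr flatten; apply: eq_map => k; by rewrite st_init. Qed.

Lemma stS s psi n : st s psi n.+1 = st (tr_trans s (psi 0)) (shift psi) n.
Proof. elim: n => // n IH. by rewrite -[LHS]/(tr_trans (st s psi n.+1) (psi n.+1)) IH. Qed.

Lemma preS s psi n : pre s psi n.+1 = tr_out s (psi 0) ++ pre (tr_trans s (psi 0)) (shift psi) n.
Proof.
rewrite /pre /=; congr (_ ++ _).
rewrite -[1]/(1 + 0) iotaDl -map_comp; congr flatten; apply: eq_map => k.
change (tr_out (st s psi k.+1) (psi k.+1) = tr_out (st (tr_trans s (psi 0)) (shift psi) k) (shift psi k)); by rewrite stS.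
Qed.

Lemma pre_add s psi a b : size (pre s psi a) <= size (pre s psi (a + b)).
Proof. by rewrite /pre iotaD map_cat flatten_cat size_cat leq_addr. Qed.

Lemma st_cat s x z k : st s (cat_pt x z) (size x + k) = st (runw s x) z k.
Proof.
elim: x s => [|b x IH] s; first by rewrite /= cat_pt0.
rewrite [size _]/= addSn stS shift_cat IH; by [].
Qed.

Lemma pre_cat s x z k : pre s (cat_pt x z) (size x + k) = outw s x ++ pre (runw s x) z k.
Proof.
elim: x s => [|b x IH] s; first by rewrite /= cat_pt0.
rewrite [size _]/= addSn preS shift_cat IH catA; by [].
Qed.

Lemma runw_cat s x1 x2 : runw s (x1 ++ x2) = runw (runw s x1) x2.
Proof. by rewrite /runw foldl_cat. Qed.

Lemma outw_cat s x1 x2 : outw s (x1 ++ x2) = outw s x1 ++ outw (runw s x1) x2.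
Proof. elim: x1 s => [|b x IH] s //=. by rewrite IH catA. Qed.

Lemma runw_rep s w k : runw s (rep w k) = iter k (fun s => runw s w) s.
Proof.
elim: k s => // k IH s.
by rewrite iterSr -IH /rep /= -/(rep w k) runw_cat.
Qed.

Lemma runw_cycle s w c j : runw s (rep w c) = s -> runw s (rep w (c * j)) = s.
Proof.
move=> h; elim: j => [|j IH]; first by rewrite muln0.
by rewrite mulnS repD runw_cat h IH.
Qed.

Lemma outw_cycle s w c j : runw s (rep w c) = s ->
  outw s (rep w (c * j)) = rep (outw s (rep w c)) j.
Proof.
move=> h; elim: j => [|j IH]; first by rewrite muln0.
by rewrite mulnS repD outw_cat h IH.
Qed.

Variable g : cantor_pt -> cantor_pt.
Hypothesis hc : computes T g.

Lemma L1 x z i : i < size (outw (tr_init T) x) ->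
  g (cat_pt x z) i = nth false (outw (tr_init T) x) i.
Proof.
move=> hi; have [_ H2] := hc (cat_pt x z).
have := H2 (size x) i; rewrite pre_init -[size x]addn0 pre_cat /pre /= cats0.
by apply.
Qed.

Lemma L2 x z i k : i < size (pre (runw (tr_init T) x) z k) ->
  g (cat_pt x z) (size (outw (tr_init T) x) + i) = nth false (pre (runw (tr_init T) x) z k) i.
Proof.
move=> hi; have [_ H2] := hc (cat_pt x z).
rewrite (H2 (size x + k)); rewrite pre_init pre_cat.
  by rewrite nth_cat ltnNge leq_addr /= addKn.
by rewrite size_cat ltn_add2l.
Qed.

Lemma L2ex x z i : exists k, i < size (pre (runw (tr_init T) x) z k).
Proof.
have [H1 _] := hc (cat_pt x z).
have [n hn] := H1 (size (outw (tr_init T) x) + i).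
exists n.
rewrite pre_init in hn.
have := leq_trans hn (pre_add _ _ n (size x)).
by rewrite (addnC n) pre_cat size_cat ltn_add2l.
Qed.

Lemma L3 x1 x2 z i : runw (tr_init T) x1 = runw (tr_init T) x2 ->
  g (cat_pt x1 z) (size (outw (tr_init T) x1) + i) =
  g (cat_pt x2 z) (size (outw (tr_init T) x2) + i).
Proof.
move=> e; have [k hk] := L2ex x1 z i.
rewrite (L2 hk); rewrite e in hk *; by rewrite (L2 hk).
Qed.

End Aux.

Definition GoodP (n : nat) (h : cantor_pt -> cantor_pt) : Prop :=
  forall u w : seq bool, exists t0 Q (A V : seq bool) (R : cantor_pt -> cantor_pt),
    [/\ 0 < Q, (forall q, prime q -> q %| Q -> q <= n) &
      forall j z, h (cat_pt (u ++ rep w (t0 + Q * j)) z) = cat_pt (A ++ rep V j) (R z)].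

Lemma pigeon (S : finType) (F : S -> S) s0 :
  exists t0 c, 0 < c <= #|S| /\ iter (t0 + c) F s0 = iter t0 F s0.
Proof.
pose f := fun i : 'I_#|S|.+1 => iter i F s0.
case: (classic (exists i j : 'I_#|S|.+1, i < j /\ f i = f j)).
  move=> [i [j [lij e]]]; exists i, (j - i); split.
    apply/andP; split; first by rewrite subn_gt0.
    have := ltn_ord j; lia.
  rewrite subnKC; last exact: ltnW.
  by [].
move=> hn; exfalso.
have inj : injective f.
  move=> i j e; apply: val_inj => /=.
  case: (ltngtP i j) => // h.
    by case: hn; exists i, j.
  by case: hn; exists j, i.
by have := leq_card _ inj; rewrite card_ord ltnn.
Qed.

Lemma iter_per (S : Type) (F : S -> S) s0 t0 c j :
  iter (t0 + c) F s0 = iter t0 F s0 -> iter (t0 + c * j) F s0 = iter t0 F s0.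
Proof.
move=> h; elim: j => [|j IH]; first by rewrite muln0 addn0.
by rewrite mulnS addnCA iterD IH -iterD addnC h.
Qed.

Lemma gen_good (T : transducer) g : computes T g -> GoodP #|tr_state T| g.
Proof.
move=> hc u w.
pose F := fun s : tr_state T => runw s w.
pose s0 := runw (tr_init T) u.
have [t0 [c [/andP [c0 cN] hper]]] := pigeon F s0.
pose ss := iter t0 F s0.
have hcyc : runw ss (rep w c) = ss.
  by rewrite runw_rep -iterD addnC hper.
pose A := outw (tr_init T) (u ++ rep w t0).
exists t0, c, A, (outw ss (rep w c)),
  (fun z i => g (cat_pt (u ++ rep w t0) z) (size A + i)).
split => // [q qp qd|j z].
  exact: leq_trans (dvdn_leq c0 qd) cN.
have hr0 : runw (tr_init T) (u ++ rep w t0) = ss by rewrite runw_cat runw_rep.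
have hrj : runw (tr_init T) (u ++ rep w (t0 + c * j)) = ss.
  by rewrite repD catA runw_cat hr0 runw_cycle.
have ho : outw (tr_init T) (u ++ rep w (t0 + c * j)) = A ++ rep (outw ss (rep w c)) j.
  by rewrite repD catA outw_cat hr0 outw_cycle.
apply: functional_extensionality => i.
rewrite {2}/cat_pt; case: ifP => hi.
  rewrite -ho in hi *; exact: L1.
have -> : i = size (A ++ rep (outw ss (rep w c)) j) + (i - size (A ++ rep (outw ss (rep w c)) j)).
  by rewrite subnKC // leqNgt hi.
rewrite addKn -ho (L3 hc (x2:=u ++ rep w t0)); last by rewrite hrj hr0.
by [].
Qed.

Lemma good_comp n g1 g2 : GoodP n g1 -> GoodP n g2 -> GoodP n (g1 \o g2).
Proof.
move=> h1 h2 u w.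
have [t0 [Q [A [V [R [Q0 hQ he]]]]]] := h2 u w.
have [t0' [Q' [A' [V' [R' [Q0' hQ' he']]]]]] := h1 A V.
exists (t0 + Q * t0'), (Q * Q'), A', V', (R' \o R); split.
- by rewrite muln_gt0 Q0.
- move=> q qp; rewrite Euclid_dvdM // => /orP [];  [exact: hQ | exact: hQ'].
- move=> j z /=.
  have -> : t0 + Q * t0' + Q * Q' * j = t0 + Q * (t0' + Q' * j).
    by rewrite mulnDr mulnA addnA.
  by rewrite he he'.
Qed.

Lemma good_id n : GoodP n id.
Proof.
move=> u w; exists 0, 1, u, w, id; split => //.
  move=> q qp; rewrite dvdn1 => /eqP q1; by rewrite q1 in qp.
by move=> j z; rewrite add0n mul1n.
Qed.

Lemma good_mono n m h : GoodP n h -> n <= m -> GoodP m h.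
Proof.
move=> hg nm u w; have [t0 [Q [A [V [R [Q0 hQ he]]]]]] := hg u w.
exists t0, Q, A, V, R; split => // q qp qd; exact: leq_trans (hQ q qp qd) nm.
Qed.

Lemma good_word n w : (forall g, List.In g w -> GoodP n g) -> GoodP n (word_prod w).
Proof.
elim: w => [|g w IH] h /=; first exact: good_id.
apply: good_comp; first by apply: h; left.
apply: IH => g' hg'; apply: h; by right.
Qed.

Lemma gens_bound (M : (cantor_pt -> cantor_pt) -> Prop) gens :
  (forall f, M f -> rational_homeo f) ->
  (forall g, List.In g gens -> M g) ->
  exists n, forall g, List.In g gens -> GoodP n g.
Proof.
move=> hR; elim: gens => [|g gs IH] hg; first by exists 0.
have [n1 h1] := IH (fun g' h => hg g' (or_intror h)).
have [_ [T hT]] := hR g (hg g (or_introl erefl)).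
exists (maxn n1 #|tr_state T|) => g' [<-|hin].
  apply: good_mono (gen_good hT) _; exact: leq_maxr.
apply: good_mono (h1 _ hin) _; exact: leq_maxl.
Qed.

Lemma rep_false m : rep [:: false] m = nseq m false.
Proof. by elim: m => //= m <-. Qed.

Lemma fsw_rep p m z k : m <= k ->
  f_switch p (cat_pt (rep [:: false] m) z) k = (if p %| k.+1 then ~~ z (k - m) else z (k - m)).
Proof. move=> hk; by rewrite /f_switch /cat_pt rep_false size_nseq ltnNge hk. Qed.

Lemma fp_bad p n : prime p -> GoodP n (f_switch p) -> p <= n.
Proof.
move=> pp hg.
have [t0 [Q [A [V [R [Q0 hQ heq]]]]]] := hg [::] [:: false].
pose a := size A; pose v := size V.
have key0 : forall z i, f_switch p (cat_pt (rep [:: false] t0) z) (a + i)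
   = f_switch p (cat_pt (rep [:: false] (t0 + Q)) z) (a + v + i).
  move=> z i.
  have e0 := heq 0 z; have e1 := heq 1 z.
  rewrite muln0 addn0 /= in e0; rewrite muln1 /= in e1.
  rewrite e0 e1 /rep /= cats0 cats0 cat_pt_size.
  by rewrite /a /v -size_cat cat_pt_size.
have key : forall z i, t0 + Q <= i ->
  (if p %| (a + i).+1 then ~~ z (a + i - t0) else z (a + i - t0)) =
  (if p %| (a + v + i).+1 then ~~ z (a + v + i - (t0 + Q)) else z (a + v + i - (t0 + Q))).
  move=> z i hi; rewrite -fsw_rep; last lia.
  rewrite -fsw_rep; last lia.
  exact: key0.
have step1 : forall i, t0 + Q <= i -> (p %| (a + i).+1) = (p %| (a + v + i).+1).
  move=> i hi; have := key (fun _ => false) i hi.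
  by case: (p %| (a + i).+1); case: (p %| (a + v + i).+1).
have pv : p %| v.
  pose K := (a + t0 + Q).+1.
  have hK : K <= p * K by rewrite leq_pmull // prime_gt0.
  have := step1 (p * K - a.+1).
  have -> : (a + (p * K - a.+1)).+1 = p * K by lia.
  have -> : (a + v + (p * K - a.+1)).+1 = p * K + v by lia.
  rewrite dvdn_mulr // dvdn_addr ?dvdn_mulr // => h; apply/esym/h; lia.
have vQ : v = Q.
  have := key (fun k => k == a + Q) (t0 + Q) (leqnn _).
  rewrite -step1 //.
  have -> : a + (t0 + Q) - t0 = a + Q by lia.
  have -> : a + v + (t0 + Q) - (t0 + Q) = a + v by lia.
  rewrite eqxx eqn_add2l.
  by case: (p %| _) => /= h; apply/eqP; [apply/negPn; rewrite -h | rewrite -h].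
apply: hQ => //; by rewrite -vQ.
Qed.

Theorem theorem3p1 (M : (cantor_pt -> cantor_pt) -> Prop) :
  submonoid_R M ->
  (forall N : nat, exists p : nat, [/\ N <= p, prime p & M (f_switch p)]) ->
  ~ fin_gen_monoid M.
Proof.
move=> [hR _ _] hinf [gens [hg hw]].
have [n hn] := gens_bound hR hg.
have [p [hnp pp hMp]] := hinf n.+1.
have [w [hw1 hw2]] := hw _ hMp.
have : GoodP n (f_switch p).
  rewrite hw2; apply: good_word => g hin; exact: hn _ (hw1 _ hin).
move/(fp_bad pp); by rewrite leqNgt hnp.
Qed.
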